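(* Let $\{\varphi_n\},\{\psi_n\}$ be biorthogonal sequences in a Hilbert space $\mathcal H$ such that $D(\varphi)$ and $D(\psi)$ are dense in $\mathcal H$. Then: (1) $(\{\varphi_n\},\{\psi_n\})$ is a $(D(\varphi),\mathcal E)$-quasi basis for some dense subspace $\mathcal E$ with $D_\varphi\subseteq\mathcal E\subseteq D(\psi)$ if and only if $D_\varphi$ is dense in $\mathcal H$. In that case $(\{\varphi_n\},\{\psi_n\})$ is a $(D(\varphi),D_\varphi)$-quasi basis. (2) $(\{\varphi_n\},\{\psi_n\})$ is a $(\mathcal D,D(\psi))$-quasi basis for some dense subspace $\mathcal D$ with $D_\psi\subseteq\mathcal D\subseteq D(\varphi)$ if and only if $D_\psi$ is dense in $\mathcal H$. In that case $(\{\varphi_n\},\{\psi_n\})$ is a $(D_\psi,D(\psi))$-quasi basis.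
   Context: Inner product linear in the first argument. Biorthogonal: $\langle\varphi_n,\psi_m\rangle=\delta_{nm}$. $D_\varphi,D_\psi$ are the linear spans; $D(\varphi)=\{x:\sum_n|\langle x,\varphi_n\rangle|^2<\infty\}$, similarly $D(\psi)$. For dense subspaces $\mathcal D,\mathcal E$ with $D_\psi\subseteq\mathcal D\subseteq D(\varphi)$, $D_\varphi\subseteq\mathcal E\subseteq D(\psi)$, the pair is a $(\mathcal D,\mathcal E)$-quasi basis if $\sum_k\langle x,\varphi_k\rangle\langle\psi_k,y\rangle=\langle x,y\rangle$ for all $x\in\mathcal D$, $y\in\mathcal E$. *)

(* Defs.v *)
From mathcomp Require Import all_boot all_algebra.
From mathcomp Require Import all_classical all_reals all_analysis.
From mathcomp Require Import complex.
Import numFieldTopology.Exports numFieldNormedType.Exports.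
Import GRing.Theory Num.Theory.
Set Implicit Arguments. Unset Strict Implicit. Unset Printing Implicit Defensive.
Local Open Scope ring_scope.
Local Open Scope classical_set_scope.

Section Defs.
Variables (R : realType) (H : completeNormedModType R[i]).

(* Together with completeness of H this makes H a Hilbert space. *)
Record is_inner_product (ip : H -> H -> R[i]) : Prop := {
  ip_linear1 : forall (a : R[i]) (x y z : H), ip (a *: x + y) z = a * ip x z + ip y z;
  ip_conj : forall x y : H, ip y x = (ip x y)^*;
  ip_norm : forall x : H, ip x x = `|x| ^+ 2 }.

Variable ip : H -> H -> R[i].

Definition biorthogonal (phi psi : nat -> H) : Prop :=
  forall n m : nat, ip (phi n) (psi m) = (n == m)%:R.

Definition is_subspace (E : set H) : Prop :=
  E 0 /\ forall (a : R[i]) (x y : H), E x -> E y -> E (a *: x + y).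

Definition lin_span (phi : nat -> H) : set H :=
  [set x | exists (n : nat) (c : nat -> R[i]), x = \sum_(k < n) c k *: phi k].

Definition Dom (phi : nat -> H) : set H :=
  [set x | cvg (series (fun n => `|ip x (phi n)| ^+ 2 : R[i]^o) @ \oo)].

Definition quasi_basis (phi psi : nat -> H) (D E : set H) : Prop :=
  [/\ is_subspace D, dense D, lin_span psi `<=` D & D `<=` Dom phi] /\
  [/\ is_subspace E, dense E, lin_span phi `<=` E & E `<=` Dom psi] /\
      (forall x y, D x -> E y ->
        series (fun k => ip x (phi k) * ip (psi k) y : R[i]^o) @ \oo --> (ip x y : R[i]^o)).
End Defs.

(* Main.v *)
Require Import Defs.
From mathcomp Require Import all_boot all_algebra.
From mathcomp Require Import all_classical all_reals all_analysis.
From mathcomp Require Import complex.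
From mathcomp Require Import ring lra.
Import numFieldTopology.Exports numFieldNormedType.Exports.
Import order.Order.TTheory GRing.Theory Num.Theory.
Set Implicit Arguments. Unset Strict Implicit. Unset Printing Implicit Defensive.
Local Open Scope ring_scope.
Local Open Scope classical_set_scope.

Section N.
Variables (R : realType) (V : normedModType R[i]).
Definition nr (v : V) : R := complex.Re `|v|.
Lemma nrE v : `|v| = (nr v)%:C%C.
Proof. by rewrite /nr RRe_real // normr_real. Qed.
Lemma nr_ge0 v : 0 <= nr v.
Proof. by rewrite -ler0c -nrE. Qed.
Lemma nr_eq0 v : nr v = 0 -> v = 0.
Proof. by move=> h; apply/normr0_eq0; rewrite nrE h. Qed.
Lemma nr0 : nr 0 = 0.
Proof. by rewrite /nr normr0. Qed.
Lemma nrD v w : nr (v + w) <= nr v + nr w.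
Proof. by rewrite -lecR rmorphD /= -!nrE ler_normD. Qed.
Lemma nrB v w : nr v - nr w <= nr (v - w).
Proof. by rewrite -lecR rmorphB /= -!nrE lerB_dist. Qed.
Lemma nrN v : nr (- v) = nr v.
Proof. by rewrite /nr normrN. Qed.
End N.
Lemma nrZ (R : realType) (V : normedModType R[i]) (a : R[i]) (v : V) : nr (a *: v) = nr (a : R[i]^o) * nr v.
Proof. by apply/eqP; rewrite -(inj_eq (@complexI _)) rmorphM /= -!nrE normrZ. Qed.
Lemma nrM (R : realType) (a b : R[i]^o) : nr (a * b) = nr a * nr b.
Proof. by apply/eqP; rewrite -(inj_eq (@complexI _)) rmorphM /= -!nrE normrM. Qed.
Section C.
Variable (R : realType).
Lemma nrC (a : R) : nr (a%:C%C : R[i]^o) = `|a|.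
Proof. by rewrite /nr normc_def /= expr0n /= addr0 sqrtr_sqr. Qed.
End C.
Section Cv.
Variable (R : realType).
Lemma posC (e : R[i]) : 0 < e -> e = (complex.Re e)%:C%C /\ 0 < complex.Re e.
Proof.
move=> e0; have he : e = (complex.Re e)%:C%C by rewrite RRe_real // gtr0_real.
by split => //; rewrite -ltcR -he.
Qed.
Lemma normC (a : R) : `|(a%:C%C : R[i]^o)| = (`|a|)%:C%C.
Proof. by rewrite nrE nrC. Qed.
Lemma ReB (a b : R[i]) : complex.Re (a - b) = complex.Re a - complex.Re b.
Proof. by case: a; case: b. Qed.
Lemma cvgC (f : nat -> R) (l : R) : f n @[n --> \oo] --> l ->
  ((f n)%:C%C : R[i]^o) @[n --> \oo] --> (l%:C%C : R[i]^o).
Proof.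
move=> /cvgrPdist_lt h; apply/cvgrPdist_lt => e e0.
have [he e0'] := posC e0.
apply: filterS (h _ e0') => n hn.
by rewrite -rmorphB /= normC he ltcR.
Qed.
Lemma cvgRe (u : nat -> R[i]^o) (l : R[i]^o) : u n @[n --> \oo] --> l ->
  complex.Re (u n) @[n --> \oo] --> complex.Re l.
Proof.
move=> /cvgrPdist_lt h; apply/cvgrPdist_lt => e e0.
have e0' : (0 : R[i]) < e%:C%C by rewrite ltcR.
apply: filterS (h _ e0') => n hn.
rewrite -ReB -ltcR; apply: le_lt_trans hn.
exact: normc_ge_Re.
Qed.
End Cv.
Section S.
Variables (R : realType) (H : completeNormedModType R[i]) (ip : H -> H -> R[i]).
Hypothesis hip : is_inner_product ip.

Lemma ipD1 x y z : ip (x + y) z = ip x z + ip y z.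
Proof. by have := ip_linear1 hip 1 x y z; rewrite scale1r mul1r. Qed.
Lemma ipZ1 a x z : ip (a *: x) z = a * ip x z.
Proof.
have h0 : ip 0 z = 0.
  have := ipD1 0 0 z; rewrite addr0 => h.
  by apply: (addrI (ip 0 z)); rewrite addr0 -h.
by have := ip_linear1 hip a x 0 z; rewrite addr0 h0 addr0.
Qed.
Lemma ip01 z : ip 0 z = 0.
Proof. by rewrite -(scale0r (0:H)) ipZ1 mul0r. Qed.
Lemma ipN1 x z : ip (- x) z = - ip x z.
Proof. by rewrite -scaleN1r ipZ1 mulN1r. Qed.
Lemma ipB1 x y z : ip (x - y) z = ip x z - ip y z.
Proof. by rewrite ipD1 ipN1. Qed.
Lemma ipD2 x y z : ip z (x + y) = ip z x + ip z y.
Proof. by rewrite (ip_conj hip) ipD1 rmorphD /= -!(ip_conj hip). Qed.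
Lemma ipZ2 a x z : ip z (a *: x) = a^* * ip z x.
Proof. by rewrite (ip_conj hip) ipZ1 rmorphM /= -!(ip_conj hip). Qed.
Lemma ip02 z : ip z 0 = 0.
Proof. by rewrite (ip_conj hip) ip01 rmorph0. Qed.
Lemma ipN2 x z : ip z (- x) = - ip z x.
Proof. by rewrite (ip_conj hip) ipN1 rmorphN /= -(ip_conj hip). Qed.
Lemma ipB2 x y z : ip z (x - y) = ip z x - ip z y.
Proof. by rewrite ipD2 ipN2. Qed.
Lemma ip_sum1 n (c : nat -> R[i]) (f : nat -> H) z :
  ip (\sum_(k < n) c k *: f k) z = \sum_(k < n) c k * ip (f k) z.
Proof.
elim: n => [|n IH]; first by rewrite !big_ord0 ip01.
by rewrite !big_ord_recr /= ipD1 IH ipZ1.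
Qed.
Lemma ip_sum2 n (c : nat -> R[i]) (f : nat -> H) z :
  ip z (\sum_(k < n) c k *: f k) = \sum_(k < n) (c k)^* * ip z (f k).
Proof.
elim: n => [|n IH]; first by rewrite !big_ord0 ip02.
by rewrite !big_ord_recr /= ipD2 IH ipZ2.
Qed.

Lemma ipvv v : ip v v = (nr v ^+ 2)%:C%C.
Proof. by rewrite (ip_norm hip) nrE rmorphXn. Qed.

Lemma ipC x y : ip y x = (ip x y)^*.
Proof. exact: (ip_conj hip). Qed.

Lemma pyth z y : ip z y = 0 -> nr (z - y) ^+ 2 = nr z ^+ 2 + nr y ^+ 2.
Proof.
move=> h; apply/eqP; rewrite -(inj_eq (@complexI _)) rmorphD /= -!ipvv.
by rewrite ipB1 !ipB2 (ipC z y) h conjC0 !subr0 sub0r opprK.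
Qed.

Lemma zero_of_dense (E : set H) z : dense E -> (forall y, E y -> ip z y = 0) -> z = 0.
Proof.
move=> dE hz; case: (pselect (z = 0)) => // hz0; exfalso.
have nz : 0 < nr z.
  by rewrite lt_neqAle nr_ge0 andbT eq_sym; apply/eqP => /nr_eq0.
have [y [hb Ey]] : ball z `|z| `&` E !=set0.
  apply: dE; last exact: ball_open.
  by exists z; apply: ballxx; rewrite nrE ltcR.
move: hb; rewrite -ball_normE /= !nrE ltcR => lt.
have := pyth (hz _ Ey); have := nr_ge0 y; have := nr_ge0 (z - y).
nra.
Qed.

Lemma lim_nr (m : nat -> H) p w : m k @[k --> \oo] --> p ->
  nr (w - m k) ^+ 2 @[k --> \oo] --> nr (w - p) ^+ 2.
Proof.
move=> hm.
have h : nr (w - m k) @[k --> \oo] --> nr (w - p).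
  apply: cvgRe; apply: cvg_norm; apply: cvgB => //; exact: cvg_cst.
rewrite expr2; under eq_fun do rewrite expr2.
exact: cvgM.
Qed.

Lemma keyid (z s : H) (e : R) :
  nr (z - (e%:C%C * ip z s) *: s) ^+ 2 =
     nr z ^+ 2 - 2 * e * nr (ip z s : R[i]^o) ^+ 2 + e ^+ 2 * nr (ip z s : R[i]^o) ^+ 2 * nr s ^+ 2.
Proof.
have hce : (e%:C%C : R[i])^* = e%:C%C := conjc_real e.
apply/eqP; rewrite -(inj_eq (@complexI _)) /= -ipvv !(rmorphB, rmorphD, rmorphN, rmorphM) /= -!nrE.
rewrite -!expr2 -!(ip_norm hip) sqr_normc ?rmorph_nat ?rmorph1.
rewrite !ipB1 !ipB2 !ipZ1 !ipZ2 rmorphM /= hce (ipC z s).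
apply/eqP; ring.
Qed.

Lemma dense_perp (V : set H) : is_subspace V ->
  (forall z, (forall v, V v -> ip z v = 0) -> z = 0) -> dense V.
Proof.
move=> [V0 Vl] hperp O [x Ox] oO.
pose S := [set r : R | exists2 v, V v & r = nr (x - v) ^+ 2].
have hlb : has_lbound S by exists 0 => r [v _ ->]; exact: sqr_ge0.
have hinf : has_inf S by split => //; exists (nr (x - 0) ^+ 2); exists 0.
set d := inf S.
have hd v : V v -> d <= nr (x - v) ^+ 2.
  by move=> Vv; apply: ge_inf => //; exists v.
have hm k : exists v, V v /\ nr (x - v) ^+ 2 < d + harmonic k.
  have [r [v Vv ->] lt] := inf_adherent (harmonic_gt0 k) hinf.
  by exists v.
have [m hm'] := choice hm.
have Vm k : V (m k) by case: (hm' k).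
have hmk k : nr (x - m k) ^+ 2 < d + harmonic k by case: (hm' k).
have cau j k : nr (m j - m k) ^+ 2 < 2 * harmonic j + 2 * harmonic k.
  have Vc : V (2^-1 *: (m j + m k)).
    by rewrite scalerDr; apply: (Vl) => //; rewrite -[_ *: m k]addr0; apply: (Vl).
  have := hd _ Vc.
  set c := x - 2^-1 *: (m j + m k).
  have par : nr (m j - m k) ^+ 2 + 4 * nr c ^+ 2 =
             2 * nr (x - m j) ^+ 2 + 2 * nr (x - m k) ^+ 2.
    apply/eqP; rewrite -(inj_eq (@complexI _)) !rmorphD !rmorphM /= -!nrE -!expr2 -!(ip_norm hip) !rmorph_nat.
    rewrite /c !ipB1 !ipB2 !ipZ1 !ipZ2 !ipD1 !ipD2.
    have hh : (2^-1 : R[i])^* = 2^-1 by rewrite fmorphV /= (conjC_nat _ 2).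
    rewrite hh; apply/eqP.
    by field.
  have := hmk j; have := hmk k; lra.
have cm : cvg (m k @[k --> \oo]).
  apply: cauchy_cvg; apply: cauchy_exP => eps eps0.
  have [he e0] := posC eps0.
  have e20 : 0 < complex.Re eps ^+ 2 / 4 by apply: divr_gt0 => //; exact: exprn_gt0.
  have := @cvg_harmonic R; move/cvgrPdist_lt => /(_ _ e20) [N _ hN].
  have hN' n : (N <= n)%N -> harmonic n < complex.Re eps ^+ 2 / 4.
    move=> hn; have := hN n hn; rewrite /= sub0r normrN ger0_norm //.
  exists (m N); exists N => // n /= hn.
  rewrite -ball_normE /= nrE he ltcR.
  have := cau N n; have := hN' N (leqnn N); have := hN' n hn.
  have := nr_ge0 (m N - m n).
  nra.
move/cvg_ex: cm => [p hp].
have h1 : nr (x - p) ^+ 2 <= d.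
  have l1 := lim_nr (w:=x) hp.
  have l2 : d + harmonic k @[k --> \oo] --> d.
    rewrite -[X in _ --> X]addr0; apply: cvgD; [exact: cvg_cst | exact: cvg_harmonic].
  rewrite -(cvg_lim _ l1) // -(cvg_lim _ l2) //.
  apply: ler_lim; [exact: cvgP l1 | exact: cvgP l2 |].
  by apply: nearW => k; apply: ltW.
have h2 s t : V s -> d <= nr (x - p - t *: s) ^+ 2.
  move=> Vs.
  have l1 := lim_nr (w:=x - t *: s) hp.
  rewrite addrAC -(cvg_lim _ l1) //; apply: limr_ge; first exact: cvgP l1.
  apply: nearW => k; have := hd _ (Vl t s (m k) Vs (Vm k)).
  by rewrite opprD addrA.
have perp s : V s -> ip (x - p) s = 0.
  move=> Vs; set z := x - p; set a := ip z s.
  pose e := (nr s ^+ 2 + 1)^-1.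
  have q0 : 0 < nr s ^+ 2 + 1 by have := sqr_ge0 (nr s); lra.
  have e0 : 0 < e by rewrite invr_gt0.
  have ee : e * (nr s ^+ 2 + 1) = 1 by rewrite mulVf // gt_eqF.
  have hce : (e%:C%C : R[i])^* = e%:C%C := conjc_real e.
  have key := keyid z s e.
  have := h2 s (e%:C%C * a) Vs; rewrite -/z key => hle.
  have := mulr_ge0 (ltW e0) (sqr_ge0 (nr (a : R[i]^o))).
  have := sqr_ge0 (nr (a : R[i]^o)); have := sqr_ge0 (nr s) => h3 h4 h5.
  have A0 : nr (a : R[i]^o) ^+ 2 = 0 by nra.
  by apply: (@nr_eq0 _ (R[i]^o)); move/eqP: A0; rewrite expf_eq0 /= => /eqP.
have z0 : x - p = 0 := hperp _ perp.
have xp : x = p by apply/eqP; rewrite -subr_eq0 z0.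
rewrite -xp in hp.
have nO : nbhs x O by move: oO; rewrite openE => /(_ x Ox).
have [N _ hN] := hp O nO.
by exists (m N); split; [exact: (hN N (leqnn N)) | exact: Vm].
Qed.

Lemma sum_delta (f : nat -> R[i]) n k :
  \sum_(j < n) f j * ((j == k :> nat)%:R) = if (k < n)%N then f k else 0.
Proof.
elim: n => [|n IH]; first by rewrite big_ord0.
rewrite big_ord_recr /= IH.
case: (ltngtP k n) => [lt|gt|->].
- by rewrite ltnS ltnW //= mulr0 addr0.
- by rewrite ltnS leqNgt gt /= mulr0 addr0.
- by rewrite ltnS leqnn /= mulr1 add0r.
Qed.

Lemma series_evcst (u : nat -> R[i]^o) n :
  (forall k, (n <= k)%N -> u k = 0) -> forall N, (n <= N)%N -> series u N = series u n.
Proof.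
move=> hu N hN; rewrite !seriesEnat /= (big_cat_nat (leq0n n) hN) /=.
rewrite [X in _ + X]big_nat_cond [X in _ + X]big1 ?addr0 // => k /andP[/andP[hk _] _].
exact: hu.
Qed.

Lemma bio_sym a b : biorthogonal ip a b -> biorthogonal ip b a.
Proof. by move=> h n m; rewrite ipC h conjC_nat eq_sym. Qed.

Lemma span_Dom a b : biorthogonal ip a b -> lin_span a `<=` Dom ip b.
Proof.
move=> hb _ [n [c ->]].
have e m : ip (\sum_(k < n) c k *: a k) (b m) = if (m < n)%N then c m else 0.
  by rewrite ip_sum1; under eq_bigr do rewrite hb; rewrite sum_delta.
apply: (is_cvg_near_cst (series (fun m => `|ip (\sum_(k < n) c k *: a k) (b m)| ^+ 2 : R[i]^o) n)).
exists n => // N /= hN; apply: series_evcst => // k hk.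
by rewrite e ltnNge hk /= normr0 expr0n.
Qed.

Lemma span_sub (a : nat -> H) : is_subspace (lin_span a).
Proof.
split; first by exists 0%N, (fun=> 0); rewrite big_ord0.
move=> al _ _ [n [c ->]] [m [d ->]].
pose N := maxn n m.
have ext (e : nat -> R[i]) k : (k <= N)%N ->
    \sum_(j < k) e j *: a j = \sum_(j < N) (if (j < k)%N then e j else 0) *: a j.
  move=> hk; rewrite -(big_mkord xpredT (fun j => e j *: a j)) -(big_mkord xpredT (fun j => (if (j < k)%N then e j else 0) *: a j)).
  rewrite (big_cat_nat (leq0n k) hk) /= [X in _ = X + _]big_nat_cond.
  rewrite [X in _ = _ + X]big_nat_cond [X in _ = _ + X]big1; last first.
    by move=> j /andP[/andP[hj _] _]; rewrite ltnNge hj scale0r.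
  rewrite addr0 [LHS]big_nat_cond; apply: eq_bigr => j /andP[/andP[_ hj] _].
  by rewrite hj.
exists N, (fun j => al * (if (j < n)%N then c j else 0) + (if (j < m)%N then d j else 0)).
rewrite (ext c n (leq_maxl _ _)) (ext d m (leq_maxr _ _)) scaler_sumr -big_split /=.
by apply: eq_bigr => j _; rewrite scalerA scalerDl.
Qed.

Lemma series_nrE (a : nat -> H) x :
  series (fun n => `|ip x (a n)| ^+ 2 : R[i]^o) =
  (fun N => (series (fun n => nr (ip x (a n) : R[i]^o) ^+ 2) N)%:C%C).
Proof.
apply: funext => N; rewrite !seriesEnat /= rmorph_sum.
by apply: eq_bigr => k _; rewrite rmorphXn /= -nrE.
Qed.

Lemma DomP (a : nat -> H) x : Dom ip a x <->
  cvgn (series (fun n => nr (ip x (a n) : R[i]^o) ^+ 2)).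
Proof.
rewrite /Dom /= series_nrE; split.
  move=> /cvg_ex [l hl]; apply/cvg_ex; exists (complex.Re l).
  exact: (cvgRe hl).
by move=> /cvg_ex [l hl]; apply/cvg_ex; exists (l%:C%C); exact: cvgC.
Qed.

Lemma Dom_sub (a : nat -> H) : is_subspace (Dom ip a).
Proof.
split.
  apply/DomP; apply: (is_cvg_near_cst 0); apply: nearW => N.
  rewrite seriesEnat /= big1 // => k _.
  by rewrite ip01 /nr normr0 /= expr0n.
move=> al x y /DomP hx /DomP hy; apply/DomP.
pose g := (2 * nr (al : R[i]^o) ^+ 2) *: (fun n => nr (ip x (a n) : R[i]^o) ^+ 2) +
          2 *: (fun n => nr (ip y (a n) : R[i]^o) ^+ 2).
apply: (@series_le_cvg _ _ g).
- by move=> n; exact: sqr_ge0.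
- move=> n; rewrite /g !fctE /GRing.scale /=.
  have := sqr_ge0 (nr (al : R[i]^o)); have := sqr_ge0 (nr (ip x (a n) : R[i]^o)).
  have := sqr_ge0 (nr (ip y (a n) : R[i]^o)); nra.
- move=> n; rewrite /g !fctE /GRing.scale /= (ip_linear1 hip).
  have h1 := nrD (al * ip x (a n) : R[i]^o) (ip y (a n)).
  rewrite nrM in h1.
  have key (s u v : R) : 0 <= s -> s <= u + v -> 0 <= u -> 0 <= v -> s ^+ 2 <= 2 * u ^+ 2 + 2 * v ^+ 2.
    move=> s0 hs u0 v0; have := sqr_ge0 (u - v).
    have : s * s <= (u + v) * (u + v) by apply: ler_pM.
    nra.
  rewrite -mulrA -exprMn; apply: key => //; rewrite ?nr_ge0 ?mulr_ge0 ?nr_ge0 //.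
- by apply: is_cvg_seriesD; apply: is_cvg_seriesZ.
Qed.

Lemma conj_cvg (u : nat -> R[i]^o) (l : R[i]^o) :
  u n @[n --> \oo] --> l -> ((u n)^* : R[i]^o) @[n --> \oo] --> (l^* : R[i]^o).
Proof.
move=> /cvgrPdist_lt h; apply/cvgrPdist_lt => e e0.
by apply: filterS (h _ e0) => n hn; rewrite -rmorphB /= norm_conjC.
Qed.

Lemma qb_swap a b D E : quasi_basis ip a b D E -> quasi_basis ip b a E D.
Proof.
move=> [hD [hE hc]]; split => //; split => //.
move=> x y Ex Dy.
have := conj_cvg (hc y x Dy Ex).
rewrite (ipC x y) conjCK.
have -> : (fun n => ((series (fun k => ip y (a k) * ip (b k) x : R[i]^o) n)^* : R[i]^o)) =
   series (fun k => ip x (b k) * ip (a k) y : R[i]^o); last by [].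
apply: funext => N; rewrite !seriesEnat /= rmorph_sum; apply: eq_bigr => k _.
by rewrite rmorphM /= -!ipC mulrC.
Qed.

Lemma in_span (a : nat -> H) n : lin_span a (a n).
Proof.
exists n.+1, (fun k => (k == n)%:R); rewrite big_ord_recr /= eqxx scale1r big1 ?add0r // => k _.
by rewrite (ltn_eqF (ltn_ord k)) scale0r.
Qed.

Lemma qb_dense a b E : quasi_basis ip a b (Dom ip a) E -> dense (lin_span a).
Proof.
move=> [_ [[_ dE _ _] hc]].
apply: dense_perp; first exact: span_sub.
move=> z hz; apply: (zero_of_dense dE) => y Ey.
have za k : ip z (a k) = 0 := hz _ (in_span a k).
have Dz : Dom ip a z.
  apply/DomP; apply: (is_cvg_near_cst 0); apply: nearW => N.
  rewrite seriesEnat /= big1 // => k _.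
  by rewrite za /nr normr0 /= expr0n.
have h := hc z y Dz Ey.
have e0 : series (fun k => ip z (a k) * ip (b k) y : R[i]^o) = fun=> 0.
  apply: funext => N; rewrite seriesEnat /= big1 // => k _.
  by rewrite za mul0r.
rewrite e0 in h.
by rewrite -(cvg_lim _ h) // lim_cst.
Qed.

Lemma qb_span a b : biorthogonal ip a b -> dense (Dom ip a) -> dense (lin_span a) ->
  quasi_basis ip a b (Dom ip a) (lin_span a).
Proof.
move=> hb dD dS.
split.
  split; [exact: Dom_sub | exact: dD | exact: span_Dom (bio_sym hb) | by []].
split.
  split; [exact: span_sub | exact: dS | by [] | exact: span_Dom hb].
move=> x y Dx [n [c ->]].
have e k : ip (b k) (\sum_(j < n) c j *: a j) = if (k < n)%N then (c k)^* else 0.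
  rewrite ip_sum2; under eq_bigr do rewrite (bio_sym hb) eq_sym.
  by rewrite (sum_delta (fun j => (c j)^*)).
apply: cvg_near_cst; exists n => // N /= hN.
have hu : forall k, (n <= k)%N ->
    ip x (a k) * ip (b k) (\sum_(j < n) c j *: a j) = 0.
  by move=> k hk; rewrite e ltnNge hk /= mulr0.
rewrite (series_evcst hu hN).
rewrite ip_sum2 seriesEnat /= big_mkord; apply: eq_bigr => k _.
by rewrite e ltn_ord mulrC.
Qed.
End S.

Unset Implicit Arguments.

Theorem proposition4p2 (R : realType) (H : completeNormedModType R[i])
  (ip : H -> H -> R[i]) (phi psi : nat -> H) :
  is_inner_product ip -> biorthogonal ip phi psi ->
  dense (Dom ip phi) -> dense (Dom ip psi) ->
  ((exists E : set H, quasi_basis ip phi psi (Dom ip phi) E) <-> dense (lin_span phi)) /\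
  (dense (lin_span phi) -> quasi_basis ip phi psi (Dom ip phi) (lin_span phi)) /\
  ((exists D : set H, quasi_basis ip phi psi D (Dom ip psi)) <-> dense (lin_span psi)) /\
  (dense (lin_span psi) -> quasi_basis ip phi psi (lin_span psi) (Dom ip psi)).
Proof.
move=> hip bio dphi dpsi.
have bio' := bio_sym hip bio.
split.
  split; first by move=> [E qb]; exact (qb_dense hip qb).
  by move=> h; exists (lin_span phi); exact (qb_span hip bio dphi h).
split; first by move=> h; exact (qb_span hip bio dphi h).
split.
  split; first by move=> [D qb]; exact (qb_dense hip (qb_swap hip qb)).
  by move=> h; exists (lin_span psi); exact (qb_swap hip (qb_span hip bio' dpsi h)).
by move=> h; exact (qb_swap hip (qb_span hip bio' dpsi h)).
Qed.
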